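(* Let $\mathcal{X}=\{x_1,\dots,x_N\}$ and $\mathcal{Y}=\{y_1,\dots,y_M\}$ be finite alphabets, $P_X$ a probability mass function on $\mathcal{X}$ with full support, and $U=(u_{ij})$ an $N\times M$ matrix whose $i$-th row is a permutation of $\{1,\dots,M\}$; write $u(x_i,y_j)=u_{ij}$. Fix $h^*\in\{1,\dots,M\}$ and let $\mathcal{Y}^+(h^* )=\{y_j\in\mathcal{Y}:\exists i,\ u_{ij}\ge h^*\}$. Then the optimal value of the problem $$\min_{P_{Y|X}}\ \max_{y\in\mathcal{S}_Y}\ \ell_{P_{Y|X}\times P_X}(X\to y)$$ over all mechanisms $P_{Y|X}=(p_{ij})$ with $p_{ij}=0$ whenever $u_{ij}<h^*$ and with $\mathcal{S}_Y=\mathcal{Y}^+(h^* )$ (which is attained by the mechanism $M^*(h^* )$ with $[M^*(h^* )]_{ij}=0$ if $u_{ij}<h^*$ and $\frac{1}{M-h^*+1}$ otherwise) equals $$-\log\min_{y\in\mathcal{Y}^+(h^* )}\ \sum_{x\in\mathcal{X}:\,u(x,y)\ge h^*}P_X(x).$$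
   Context: A privacy mechanism is a conditional distribution $P_{Y|X}$, written as an $N\times M$ row-stochastic matrix with $p_{ij}=P_{Y|X=x_i}(y_j)$. With $P_Y(y)=\sum_x P_X(x)P_{Y|X=x}(y)$, the output support is $\mathcal{S}_Y=\{y:P_Y(y)>0\}$ and $P_{X|Y=y}(x)=P_{Y|X=x}(y)P_X(x)/P_Y(y)$. The pointwise maximal leakage of $y\in\mathcal{S}_Y$ is $\ell_{P_{Y|X}\times P_X}(X\to y)=\log\max_{x\in\mathcal{X}}\frac{P_{X|Y=y}(x)}{P_X(x)}$. The entry $u_{ij}=k$ means that the pair $(x_i,y_j)$ yields the $k$-th lowest utility value for input $x_i$. *)

(* Defs.v *)
From HB Require Import structures.
From mathcomp Require Import all_boot all_order all_algebra.
From mathcomp Require Import all_classical all_reals all_analysis.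
Set Implicit Arguments. Unset Strict Implicit. Unset Printing Implicit Defensive.
Import Order.TTheory GRing.Theory Num.Theory.
Local Open Scope ring_scope.

Section Defs.
Variables (R : realType) (N M : nat).

Definition full_pmf (PX : 'I_N -> R) : Prop :=
  (forall i, 0 < PX i) /\ \sum_(i < N) PX i = 1.

Definition utility_matrix (U : 'I_N -> 'I_M -> nat) : Prop :=
  forall i, injective (U i) /\ (forall j, (1 <= U i j <= M)%N).

Definition mechanism (p : 'M[R]_(N, M)) : Prop :=
  (forall i j, 0 <= p i j) /\ (forall i, \sum_(j < M) p i j = 1).

Definition PY (PX : 'I_N -> R) (p : 'M[R]_(N, M)) (j : 'I_M) : R :=
  \sum_(i < N) PX i * p i j.

Definition post (PX : 'I_N -> R) (p : 'M[R]_(N, M)) (j : 'I_M) (i : 'I_N) : R :=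
  p i j * PX i / PY PX p j.

(* Pointwise maximal leakage of y_j:  log max_x P_{X|Y=y}(x)/P_X(x).
   All ratios are nonnegative, so 0 is a neutral start for the max. *)
Definition pml (PX : 'I_N -> R) (p : 'M[R]_(N, M)) (j : 'I_M) : R :=
  ln (\big[Num.max/0]_(i < N) (post PX p j i / PX i)).

(* Objective: max over the output support S_Y of the pointwise maximal
   leakage (pml is always >= 0 on S_Y, so 0 is a neutral start). *)
Definition max_pml (PX : 'I_N -> R) (p : 'M[R]_(N, M)) : R :=
  \big[Num.max/0]_(j < M | 0 < PY PX p j) pml PX p j.

Definition Yplus (U : 'I_N -> 'I_M -> nat) (h : nat) (j : 'I_M) : bool :=
  [exists i, (h <= U i j)%N].

Definition feasible (PX : 'I_N -> R) (U : 'I_N -> 'I_M -> nat) (h : nat)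
  (p : 'M[R]_(N, M)) : Prop :=
  mechanism p /\ (forall i j, (U i j < h)%N -> p i j = 0) /\
  (forall j, (0 < PY PX p j) <-> Yplus U h j).

Definition Mstar (U : 'I_N -> 'I_M -> nat) (h : nat) : 'M[R]_(N, M) :=
  \matrix_(i, j) (if (U i j < h)%N then 0 else ((M - h).+1)%:R^-1).

(* -log min_{y in Y^+(h)} sum_{x : u(x,y) >= h} P_X(x)
   (each sum is <= 1, so 1 is a neutral start for the min). *)
Definition opt_value (PX : 'I_N -> R) (U : 'I_N -> 'I_M -> nat) (h : nat) : R :=
  - ln (\big[Num.min/1]_(j < M | Yplus U h j) \sum_(i < N | (h <= U i j)%N) PX i).

End Defs.

(* Main.v *)
Require Import Defs.
From HB Require Import structures.
From mathcomp Require Import all_boot all_order all_algebra.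
From mathcomp Require Import all_classical all_reals all_analysis.
From mathcomp Require Import zify ring lra.
Import Order.TTheory GRing.Theory Num.Theory.
Local Open Scope ring_scope.

Lemma row_count (M : nat) (f : 'I_M -> nat) (h : nat) :
  injective f -> (forall j, (1 <= f j <= M)%N) -> (1 <= h <= M)%N ->
  #|[pred j | (h <= f j)%N]| = (M - h).+1.
Proof.
move=> finj frng /andP[h1 hM].
set s1 := map f (enum 'I_M).
have U1 : uniq s1 by rewrite map_inj_uniq // enum_uniq.
have sub : {subset s1 <= iota 1 M}.
  move=> x /mapP[j _ ->]; rewrite mem_iota; have /andP[a b] := frng j.
  by rewrite a /= add1n ltnS.
have sz : (size (iota 1 M) <= size s1)%N by rewrite size_iota size_map size_enum_ord.
have [_ eqs] := uniq_min_size U1 sub sz.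
have pe : perm_eq s1 (iota 1 M) by apply: uniq_perm => //; exact: iota_uniq.
rewrite cardE /enum_mem size_filter.
have -> : count (mem [pred j | (h <= f j)%N]) (Finite.enum 'I_M)
   = count (fun x => (h <= x)%N) s1.
  by rewrite count_map -enumT.
rewrite (permP pe).
have -> : M = ((h.-1) + (M - h).+1)%N by rewrite -subSn // -(prednK h1) subSS addnC subnK // (leq_trans _ hM) // leq_pred.
rewrite iotaD count_cat.
rewrite (eq_in_count (a2 := pred0)); last first.
  move=> x; rewrite mem_iota => /andP[_]; rewrite add1n prednK // => xh.
  by rewrite /= leqNgt xh.
rewrite count_pred0 add0n.
rewrite (eq_in_count (a2 := predT)); last first.
  move=> x; rewrite mem_iota => /andP[]; rewrite add1n prednK // => hx _; exact: hx.
rewrite count_predT size_iota.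
congr S; lia.
Qed.

Section Main.
Variables (R : realType) (N M : nat) (PX : 'I_N -> R) (U : 'I_N -> 'I_M -> nat) (h : nat).
Hypothesis (HPX : full_pmf PX).

Let S j := \sum_(i < N | (h <= U i j)%N) PX i.

Lemma PX_ge0 i : 0 <= PX i. Proof. by apply/ltW; case: HPX. Qed.

Lemma S_pos j : Yplus U h j -> 0 < S j.
Proof.
case/existsP=> i Hi; rewrite /S (bigD1 i) //=.
apply: (lt_le_trans (proj1 HPX i)); rewrite lerDl; apply: sumr_ge0 => k _; exact: PX_ge0.
Qed.

Lemma S_le1 j : S j <= 1.
Proof.
rewrite -(proj2 HPX) /S big_mkcond /=; apply: ler_sum => i _.
by case: ifP => _ //; exact: PX_ge0.
Qed.

Let minS := \big[Num.min/1]_(j < M | Yplus U h j) S j.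

Lemma minS_pos : 0 < minS.
Proof.
rewrite /minS; apply: (big_ind (fun x => 0 < x)) => //.
  by move=> x y ?; rewrite lt_min => ?; apply/andP.
exact: S_pos.
Qed.

Lemma lower p : feasible PX U h p -> opt_value PX U h <= max_pml PX p.
Proof.
move=> [[p0 prow] [pz supp]].
have [j1 Hj1|none] := pickP (fun j => Yplus U h j); last first.
  rewrite /opt_value big_pred0 // ln1 oppr0.
  exact: (@bigmax_ge_id _ R _ (index_enum 'I_M) 0 (fun j => 0 < PY PX p j) (pml PX p)).
have [j0 Yj0 minE] := @eq_bigmin _ R _ 1 j1 (fun j => Yplus U h j) S Hj1 (fun j _ => S_le1 j).
have Hj0 : 0 < PY PX p j0 by apply/supp.
have Hm := @le_bigmax_cond _ R _ 0 j0 (fun j => 0 < PY PX p j) (pml PX p) Hj0.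
apply: (le_trans _ Hm).
rewrite /opt_value /pml -/(S _) -/minS.
set r := \big[Num.max/0]_(i < N) _.
have Sp := S_pos _ Yj0.
have mS : minS <= S j0 by exact: bigmin_le_cond.
have mp := minS_pos.
have key : 1 <= r * S j0.
  have H : PY PX p j0 <= S j0 * (r * PY PX p j0).
    rewrite /S mulr_suml /PY [X in _ <= X]big_mkcond /=; apply: ler_sum => i _.
    case: leqP => hi; last by rewrite pz // mulr0.
    apply: ler_wpM2l; first exact: PX_ge0.
    rewrite -ler_pdivrMr //.
    have : post PX p j0 i / PX i <= r.
      exact: (@le_bigmax_cond _ R _ 0 i xpredT (fun i => post PX p j0 i / PX i) (erefl true)).
    have PXi := proj1 HPX i.
    suff -> : post PX p j0 i / PX i = p i j0 / PY PX p j0 by [].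
    by rewrite /post; field; rewrite ?gt_eqF.
  nra.
have rp : 0 < r by nra.
rewrite -lnV ?posrE //; rewrite ler_ln ?posrE ?invr_gt0 //.
rewrite /minS minE -div1r ler_pdivrMr //.
Qed.


Hypothesis (HU : utility_matrix U) (hh : (1 <= h <= M)%N).

Let K : R := ((M - h).+1)%:R.
Lemma K_pos : 0 < K. Proof. by rewrite /K ltr0n. Qed.

Lemma Mstar_E i j : Mstar R U h i j = if (U i j < h)%N then 0 else K^-1.
Proof. by rewrite /Mstar mxE. Qed.

Lemma PY_Mstar j : PY PX (Mstar R U h) j = S j / K.
Proof.
rewrite /PY /S mulr_suml [RHS]big_mkcond /=; apply: eq_bigr => i _.
by rewrite Mstar_E; case: ltnP => _; rewrite ?mulr0.
Qed.

Lemma supp_Mstar j : 0 < PY PX (Mstar R U h) j <-> Yplus U h j.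
Proof.
rewrite PY_Mstar; split.
  apply: contraLR => /existsPn Hn.
  rewrite /S big_pred0 ?mul0r ?ltxx // => i; exact: negbTE (Hn i).
by move=> Y; rewrite divr_gt0 // ?K_pos // S_pos.
Qed.

Lemma feas_Mstar : feasible PX U h (Mstar R U h).
Proof.
split; [split|split].
- by move=> i j; rewrite Mstar_E; case: ifP => _ //; rewrite invr_ge0 ltW // K_pos.
- move=> i; have [inj rng] := HU i.
  rewrite (eq_bigr (fun j => if (h <= U i j)%N then K^-1 else 0)); last first.
    by move=> j _; rewrite Mstar_E ltnNge; case: (h <= U i j)%N.
  rewrite -big_mkcond /=.
  rewrite (eq_bigl (fun j => j \in [pred j | (h <= U i j)%N])) // sumr_const.
  rewrite row_count // -mulr_natr mulVf // gt_eqF // K_pos.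
- by move=> i j hij; rewrite Mstar_E hij.
- exact: supp_Mstar.
Qed.

Lemma pml_Mstar j : Yplus U h j -> pml PX (Mstar R U h) j = - ln (S j).
Proof.
move=> Y; have Sp := S_pos _ Y; have Kp := K_pos.
rewrite /pml.
rewrite (eq_bigr (fun i => if (U i j < h)%N then 0 else (S j)^-1)); last first.
  move=> i _; rewrite /post PY_Mstar Mstar_E.
  have PXi := proj1 HPX i.
  case: ifP => _; first by rewrite !mul0r.
  by field; rewrite ?gt_eqF.
have -> : \big[Num.max/0]_(i < N) (if (U i j < h)%N then 0 else (S j)^-1) = (S j)^-1.
  apply/le_anti/andP; split.
    apply: bigmax_le; first by rewrite invr_ge0 ltW.
    by move=> i _; case: ifP => _ //; rewrite invr_ge0 ltW.
  case/existsP: Y => i0 Hi0.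
  have := @le_bigmax_cond _ R _ 0 i0 xpredT (fun i => if (U i j < h)%N then 0 else (S j)^-1) (erefl true).
  by rewrite /= ltnNge Hi0.
by rewrite lnV // posrE.
Qed.

Lemma val_Mstar : max_pml PX (Mstar R U h) = opt_value PX U h.
Proof.
rewrite /max_pml /opt_value -/(S _).
rewrite (eq_bigl (fun j => Yplus U h j)); last first.
  by move=> j; apply/idP/idP => H; apply/supp_Mstar.
rewrite (eq_bigr (fun j => - ln (S j))); last by move=> j Y; exact: pml_Mstar.
set L := \big[Num.max/0]_(j | _) _.
set m := \big[Num.min/1]_(j | _) _.
suff : (0 < m <= 1) /\ L = - ln m by case.
apply: (big_rec2 (fun x y => (0 < y <= 1) /\ x = - ln y)).
  by rewrite ltr01 lexx ln1 oppr0.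
move=> j x y Y [/andP[y0 y1] ->].
have Sp := S_pos _ Y; have S1 := S_le1 j.
have [Sy|yS] := leP (S j) y.
  by rewrite Sp S1 max_l // lerN2 ler_ln ?posrE.
by rewrite y0 y1 max_r // lerN2 ler_ln ?posrE // ltW.
Qed.

Theorem corollary1_aux :
  (forall p : 'M[R]_(N, M), feasible PX U h p -> opt_value PX U h <= max_pml PX p) /\
  feasible PX U h (Mstar R U h) /\ max_pml PX (Mstar R U h) = opt_value PX U h.
Proof. split; [exact: lower | split; [exact: feas_Mstar | exact: val_Mstar]]. Qed.


End Main.

Theorem corollary1 (R : realType) (N M : nat) (PX : 'I_N -> R)
  (U : 'I_N -> 'I_M -> nat) (h : nat) :
  full_pmf PX -> utility_matrix U -> (1 <= h <= M)%N ->
  (forall p : 'M[R]_(N, M), feasible PX U h p -> opt_value PX U h <= max_pml PX p) /\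
  feasible PX U h (Mstar R U h) /\ max_pml PX (Mstar R U h) = opt_value PX U h.
Proof. by move=> H1 H2 H3; apply: corollary1_aux. Qed.
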